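(* A 2-edge-colored graph $G$ is PC acyclic of type 5 if and only if $G$ is bipartite and has no PC cycle.
   Context: A 2-edge-colored graph is a finite undirected graph in which every edge is colored with one of two colors. A walk $v_1e_1v_2\dots e_{p-1}v_p$ is properly colored (PC) if consecutive edges $e_i,e_{i+1}$ have different colors and, if closed ($v_1=v_p$), $e_{p-1}$ and $e_1$ also differ in color; a PC cycle is a PC closed walk whose vertices other than the first/last are distinct. An ordering $v_1,\dots,v_n$ of $V(G)$ is of type 5 if for every $i\in[n]$, all edges from $v_i$ to $\{v_{i+1},\dots,v_n\}$ have the same color, all edges from $v_i$ to $\{v_1,\dots,v_{i-1}\}$ have the same color, and these two colors are different. $G$ is PC acyclic of type 5 if it has an ordering of its vertices of type 5. *)

(* Defs.v *)
From mathcomp Require Import all_boot.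
Set Implicit Arguments. Unset Strict Implicit. Unset Printing Implicit Defensive.

(* A 2-edge-colored (simple, finite, undirected) graph on a finite vertex
   type T is given by a symmetric irreflexive adjacency relation adj and a
   symmetric coloring col : T -> T -> bool (two colors = false/true);
   col x y is the color of the edge xy whenever adj x y. *)

Definition bipartite (T : finType) (adj : rel T) : Prop :=
  exists f : T -> bool, forall x y, adj x y -> f x != f y.

Definition pc_cycle (T : finType) (adj : rel T) (col : T -> T -> bool)
    (s : seq T) : Prop :=
  match s with
  | [::] => False
  | x :: _ =>
    let k := size s in
    let v i := nth x s (i %% k) in
    uniq s /\
    forall i, i < k ->
      adj (v i) (v i.+1) /\ col (v i) (v i.+1) != col (v i.+1) (v i.+2)
  end.

Definition type5_ordering (T : finType) (adj : rel T) (col : T -> T -> bool)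
    (s : seq T) : Prop :=
  uniq s /\ (forall x, x \in s) /\
  forall x, exists c : bool, forall y, adj x y ->
    (index x s < index y s -> col x y = c) /\
    (index y s < index x s -> col x y = ~~ c).

Definition pc_acyclic_type5 (T : finType) (adj : rel T) (col : T -> T -> bool)
  : Prop := exists s, type5_ordering adj col s.

(* Main.v *)
Require Import Defs.
From mathcomp Require Import all_boot.
From Stdlib Require Import ClassicalEpsilon.
Set Implicit Arguments. Unset Strict Implicit.
Lemma cycle_nth (T : eqType) (E : rel T) y p :
  path E y (rcons p y) -> forall i,
  E (nth y (y :: p) (i %% size (y :: p))) (nth y (y :: p) (i.+1 %% size (y :: p))).
Proof.
move=> /(pathP y) H i.
set k := size (y :: p).
have kE : k = (size p).+1 by [].
have hj : i %% k < k by rewrite ltn_mod kE.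
have -> : i.+1 %% k = (i %% k).+1 %% k by rewrite -addn1 -modnDml addn1.
move: hj; set j := i %% k => hj.
have := H j; rewrite size_rcons -kE => /(_ hj).
rewrite -rcons_cons !nth_rcons /= -kE hj.
have [jlt|jge] := ltnP j (size p).
  by rewrite modn_small ?kE ?ltnS // ltnW.
have jeq : j = size p by apply/eqP; rewrite eqn_leq jge -ltnS -kE hj.
by rewrite jeq kE modnn eqxx.
Qed.
Section S2.
Variables (T : finType) (adj : rel T) (col : T -> T -> bool)
  (adj_sym : symmetric adj) (adj_irr : irreflexive adj)
  (col_sym : forall x y, col x y = col y x).

Lemma fwd_bip : pc_acyclic_type5 adj col -> bipartite adj.
Proof.
case=> s0 [u0 [all0 H5]].
exists (fun x => proj1_sig (constructive_indefinite_description _ (H5 x))).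
move=> x y Axy.
case: (constructive_indefinite_description _ (H5 x)) => cx Hx.
case: (constructive_indefinite_description _ (H5 y)) => cy Hy /=.
have Ayx : adj y x by rewrite adj_sym.
have nxy : x != y by apply: contraTneq Axy => ->; rewrite adj_irr.
have hne : index x s0 != index y s0.
  by apply: contra nxy => /eqP /(index_inj x (all0 x) (all0 y)) ->.
case: (ltngtP (index x s0) (index y s0)) hne => // [lt|lt] _.
- have h1 := (Hx y Axy).1 lt; have h2 := (Hy x Ayx).2 lt.
  rewrite col_sym h1 in h2; by rewrite h2; case: (cy).
- have h1 := (Hx y Axy).2 lt; have h2 := (Hy x Ayx).1 lt.
  rewrite col_sym h2 in h1; by rewrite h1; case: (cx).
Qed.

Lemma fwd_nocyc : pc_acyclic_type5 adj col -> ~ (exists s, pc_cycle adj col s).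
Proof.
case=> s0 [u0 [all0 H5]] [[|x s'] //= [us Hc]].
set k := (size s').+1.
pose V n := nth x (x :: s') (n %% k).
have VD : forall n d, V (n %% k + d) = V (n + d) by move=> n d; rewrite /V modnDml.
have HC : forall n, adj (V n) (V n.+1) /\ col (V n) (V n.+1) != col (V n.+1) (V n.+2).
  move=> n; have := Hc (n %% k); rewrite ltn_mod /= => /(_ isT).
  have e0 : nth x (x::s') ((n %% k) %% k) = V n by rewrite /V modn_mod.
  have e1 : nth x (x::s') ((n %% k).+1 %% k) = V n.+1 by rewrite /V -addn1 modnDml addn1.
  have e2 : nth x (x::s') ((n %% k).+2 %% k) = V n.+2 by rewrite /V -addn2 modnDml addn2.
  by rewrite e0 e1 e2.
case: (@arg_maxnP _ (ord0 : 'I_k) xpredT (fun i => index (nth x (x::s') i) s0) isT)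
  => i _ Hmax.
have Hb : forall n, index (V n) s0 <= index (V i) s0.
  move=> n; rewrite /V (modn_small (ltn_ord i)).
  have hn : n %% k < k by rewrite ltn_mod.
  exact: (Hmax (Ordinal hn)).
set m := V i.
have [Aam Dif] := HC (i + size s').
have [Amb _] := HC i.
have e1 : V (i + size s').+1 = m by rewrite /V /m -addnS /k modnDr.
have e2 : V (i + size s').+2 = V i.+1 by rewrite /V -addn2 -addnA addn2 -addSnnS /k modnDr.
rewrite e1 e2 in Aam Dif.
set a := V (i + size s') in Aam Dif.
set b := V i.+1 in Amb Dif.
have lt_m : forall z, adj z m -> index z s0 <= index m s0 -> index z s0 < index m s0.
  move=> z Azm le; rewrite ltn_neqAle le andbT.
  apply/negP => /eqP /(index_inj z (all0 z) (all0 m)) e.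
  by rewrite e adj_irr in Azm.
have la : index a s0 < index m s0 by apply: lt_m => //; exact: Hb.
have lb : index b s0 < index m s0.
  by apply: lt_m; [rewrite adj_sym | exact: Hb].
case: (H5 m) => c Hm.
have ha := (Hm a (etrans (adj_sym _ _) Aam)).2 la.
have hb := (Hm b Amb).2 lb.
by move: Dif; rewrite (col_sym a m) ha hb eqxx.
Qed.
End S2.
Section S3.
Variables (T : finType) (adj : rel T) (col : T -> T -> bool)
  (adj_sym : symmetric adj) (adj_irr : irreflexive adj)
  (col_sym : forall x y, col x y = col y x).

Lemma bwd : bipartite adj -> ~ (exists s, pc_cycle adj col s) ->
  pc_acyclic_type5 adj col.
Proof.
case=> f bip nocyc.
pose E := [rel x y | adj x y && (col x y == f x)].
have cyc : forall y p, path E y (rcons p y) -> uniq (y :: p) -> False.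
  move=> y p Hp Hu; apply: nocyc; exists (y :: p); split => // i _.
  have h1 := cycle_nth Hp i; have h2 := cycle_nth Hp i.+1.
  move: h1 h2; set a := nth y _ _; set b := nth y _ _; set c := nth y _ _.
  rewrite /E /= => /andP[Aab /eqP eab] /andP[_ /eqP ebc]; split => //.
  by rewrite eab ebc; exact: bip.
pose r x := #|[set z | connect E z x]|.
have key : forall x y, E x y -> r x < r y.
  move=> x y Exy; apply: proper_card; apply/properP; split.
    apply/subsetP => z; rewrite !inE => Hz.
    by apply: (connect_trans Hz); apply: connect1.
  exists y; first by rewrite inE connect0.
  rewrite inE; apply/negP; case/connectP => p Hp.
  move: Exy; case: (shortenP Hp) => p' Hp' Hu _ Exy Hx.
  apply: (cyc y p' _ Hu); rewrite rcons_path Hp' /=; by rewrite -Hx.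
pose leR := [rel a b | r a <= r b].
pose s0 := sort leR (enum T).
have all0 : forall x, x \in s0 by move=> x; rewrite mem_sort mem_enum.
have srt : sorted leR s0 by apply: sort_sorted => a b; exact: leq_total.
have idx : forall x y, E x y -> index x s0 < index y s0.
  move=> x y Exy; rewrite ltnNge leq_eqVlt; apply/negP; case/orP.
    move/eqP/(index_inj x (all0 y) (all0 x)) => eyx.
    by move: Exy; rewrite /= eyx adj_irr.
  move=> lt; have := @sorted_ltn_index _ leR (fun b a c => @leq_trans (r b) (r a) (r c)) _ srt y x (all0 y) (all0 x) lt.
  by rewrite /= leqNgt key.
exists s0; split; first by rewrite sort_uniq enum_uniq.
split=> // x; exists (f x) => y Axy.
have Ayx : adj y x by rewrite adj_sym.
have bxy := bip x y Axy.
split => lt.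
- case: (boolP (col x y == f x)) => [/eqP //|nc].
  have Eyx : E y x.
    rewrite /= Ayx col_sym /=; move: nc bxy.
    by case: (col x y); case: (f x); case: (f y).
  by have := idx _ _ Eyx; rewrite ltnNge ltnW.
- case: (boolP (col x y == f x)) => [ec|nc].
    have Exy : E x y by rewrite /= Axy ec.
    by have := idx _ _ Exy; rewrite ltnNge ltnW.
  by move: nc; case: (col x y); case: (f x).
Qed.
End S3.

Theorem corollary2 (T : finType) (adj : rel T) (col : T -> T -> bool)
  (adj_sym : symmetric adj) (adj_irr : irreflexive adj)
  (col_sym : forall x y, col x y = col y x) :
  pc_acyclic_type5 adj col <->
  (bipartite adj /\ ~ (exists s : seq T, pc_cycle adj col s)).
Proof.
split.
  move=> H; split.
    exact: (fwd_bip adj_sym adj_irr col_sym H).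
  exact: (fwd_nocyc adj_sym adj_irr col_sym H).
by case=> H1 H2; exact: (bwd adj_sym adj_irr col_sym H1 H2).
Qed.
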